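(* Let $n>1$ be a natural number which is either multiplicatively $e$-perfect (i.e. $T_e(n)=n^2$) or multiplicatively $e$-superperfect (i.e. $T_e(T_e(n))=n^2$). Then $n$ is $e$-harmonic of type $2$ if and only if $S_e(n)$ divides $d_e(n)$.
   Context: For $n=p_1^{a_1}\cdots p_r^{a_r}>1$ (prime factorization), a divisor $d=p_1^{b_1}\cdots p_r^{b_r}$ of $n$ is an exponential divisor ($e$-divisor) if $b_i\mid a_i$ for all $i$. $T_e(n)$ is the product of the $e$-divisors of $n$, $d_e(n)=d(a_1)\cdots d(a_r)$ is the number of $e$-divisors of $n$ (where $d(m)$ is the number of positive divisors of $m$), and $S_e(n)=\prod_{i=1}^r\left(\sum_{d_i\mid a_i}p_i^{a_i-d_i}\right)$. An integer $n$ is called $e$-harmonic of type $2$ if $S_e(n)\mid n\,d_e(n)$. *)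

(* Defs.v *)
From mathcomp Require Import all_boot.
Set Implicit Arguments. Unset Strict Implicit. Unset Printing Implicit Defensive.

(* d is an exponential divisor of n: d | n, d > 0, and for each prime p | n,
   the exponent b of p in d divides the exponent a of p in n.  Since a >= 1 and
   0 %| a is false, this forces b >= 1, i.e. d has the same prime support. *)
Definition is_edivisor (n d : nat) : bool :=
  (d %| n) && (0 < d) && all (fun p => logn p d %| logn p n) (primes n).

Definition edivisors (n : nat) : seq nat := [seq d <- divisors n | is_edivisor n d].

Definition Te (n : nat) : nat := \prod_(d <- edivisors n) d.

Definition ndiv (m : nat) : nat := size (divisors m).

Definition de (n : nat) : nat := \prod_(p <- primes n) ndiv (logn p n).

Definition Se (n : nat) : nat :=
  \prod_(p <- primes n) \sum_(d <- divisors (logn p n)) p ^ (logn p n - d).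

Definition e_harmonic2 (n : nat) : Prop := Se n %| n * de n.

Definition mult_e_perfect (n : nat) : Prop := Te n = n ^ 2.
Definition mult_e_superperfect (n : nat) : Prop := Te (Te n) = n ^ 2.

(* Main.v *)
Require Import Defs.
From mathcomp Require Import all_boot.
From mathcomp Require Import zify.
Set Implicit Arguments. Unset Strict Implicit.

Definition sig (a : nat) := \sum_(b <- divisors a) b.
Definition K (x : nat) := size (edivisors x).

Lemma prod_const_seq (I : Type) (s : seq I) c : \prod_(i <- s) c = c ^ size s.
Proof. elim: s => [|x s IH]; first by rewrite big_nil. by rewrite big_cons IH expnS. Qed.

Lemma prod_exp_seq (I : Type) (s : seq I) F k :
  \prod_(i <- s) (F i) ^ k = (\prod_(i <- s) F i) ^ k.
Proof. elim: s => [|x s IH]; first by rewrite !big_nil exp1n. by rewrite !big_cons IH expnMn. Qed.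

Lemma prod_pow_sum (I : Type) (s : seq I) p F :
  \prod_(i <- s) p ^ F i = p ^ (\sum_(i <- s) F i).
Proof. elim: s => [|x s IH]; first by rewrite !big_nil. by rewrite !big_cons IH expnD. Qed.

Lemma mem_ed n d : 0 < n -> (d \in edivisors n) = is_edivisor n d.
Proof.
move=> n0; rewrite /edivisors mem_filter -dvdn_divisors //.
by case E: (is_edivisor n d) => //=; move: E => /andP[/andP[-> _] _].
Qed.

Lemma uniq_ed n : uniq (edivisors n).
Proof. exact: filter_uniq (divisors_uniq n). Qed.

Lemma ed_self n : 0 < n -> n \in edivisors n.
Proof.
move=> n0; rewrite mem_ed // /is_edivisor dvdnn n0 /=.
by apply/allP => p _; exact: dvdnn.
Qed.

Lemma ed_pos n d : d \in edivisors n -> 0 < d.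
Proof. by rewrite mem_filter => /andP[/andP[/andP[_ ->] _] _]. Qed.

Lemma ed_dvd n d : d \in edivisors n -> d %| n.
Proof. by rewrite mem_filter => /andP[/andP[/andP[-> _] _] _]. Qed.

Lemma Te_gt0 n : 0 < Te n.
Proof.
rewrite /Te big_seq; apply: (big_ind (fun x => 0 < x)) => // [x y|d dn]; first by rewrite muln_gt0 => -> ->.
exact: ed_pos dn.
Qed.

Lemma Te_ge n : 0 < n -> n <= Te n.
Proof.
move=> n0; apply: dvdn_leq (Te_gt0 n) _.
rewrite /Te (bigD1_seq n) ?ed_self ?uniq_ed //=.
exact: dvdn_mulr.
Qed.

Lemma K_gt0 n : 0 < n -> 0 < K n.
Proof.
move=> n0; rewrite /K lt0n size_eq0; apply/eqP => E.
by move: (ed_self n0); rewrite E.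
Qed.

Lemma coprime_Te p m : coprime p m -> coprime p (Te m).
Proof.
move=> cpm; rewrite /Te big_seq; apply: (big_ind (coprime p)) => [|x y|d dm].
- exact: coprimen1.
- by rewrite coprimeMr => -> ->.
- exact: coprime_dvdr (ed_dvd dm) cpm.
Qed.

Lemma ed_mul x y d1 d2 : coprime x y -> 0 < x -> 0 < y ->
  is_edivisor x d1 -> is_edivisor y d2 -> is_edivisor (x * y) (d1 * d2).
Proof.
move=> cxy x0 y0 /andP[/andP[d1x d1p] a1] /andP[/andP[d2y d2p] a2].
rewrite /is_edivisor dvdn_mul // muln_gt0 d1p d2p /=.
apply/allP => q; rewrite primesM // => /orP[qx|qy].
- move: (qx); rewrite mem_primes => /and3P[_ _ qdx].
  have cqy : coprime q y := coprime_dvdl qdx cxy.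
  have cqd2 : coprime q d2 := coprime_dvdr d2y cqy.
  rewrite !lognM // (logn_coprime cqy) (logn_coprime cqd2) !addn0.
  exact: (allP a1).
- move: (qy); rewrite mem_primes => /and3P[_ _ qdy].
  have cqx : coprime q x by apply: coprime_dvdl qdy _; rewrite coprime_sym.
  have cqd1 : coprime q d1 := coprime_dvdr d1x cqx.
  rewrite !lognM // (logn_coprime cqx) (logn_coprime cqd1) !add0n.
  exact: (allP a2).
Qed.

Lemma gcd_split x y d : d %| x * y -> coprime x y -> d = gcdn d x * gcdn d y.
Proof.
move=> dxy cxy; apply/eqP; rewrite eqn_dvd; apply/andP; split.
- have h1 : d %| gcdn d x * y.
    by rewrite muln_gcdl dvdn_gcd dxy dvdn_mulr.
  by rewrite muln_gcdr dvdn_gcd dvdn_mull // mulnC.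
- have cg : coprime (gcdn d x) (gcdn d y).
    apply: coprime_dvdl (dvdn_gcdr d x) _.
    exact: coprime_dvdr (dvdn_gcdr d y) cxy.
  by rewrite Gauss_dvd // !dvdn_gcdl.
Qed.

Lemma ed_split_l x y d : coprime x y -> 0 < x -> 0 < y ->
  is_edivisor (x * y) d -> is_edivisor x (gcdn d x).
Proof.
move=> cxy x0 y0 /andP[/andP[dxy d0] ad].
have E := gcd_split dxy cxy.
rewrite /is_edivisor dvdn_gcdr gcdn_gt0 x0 orbT /=.
apply/allP => q qx.
move: (qx); rewrite mem_primes => /and3P[_ _ qdx].
have cqy : coprime q y := coprime_dvdl qdx cxy.
have cqg : coprime q (gcdn d y) := coprime_dvdr (dvdn_gcdr d y) cqy.
have -> : logn q (gcdn d x) = logn q d.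
  by rewrite {2}E lognM ?gcdn_gt0 ?x0 ?y0 ?orbT // (logn_coprime cqg) addn0.
have -> : logn q x = logn q (x * y) by rewrite lognM // (logn_coprime cqy) addn0.
by apply: (allP ad); rewrite primesM // qx.
Qed.

Lemma split_uniq x y u1 u2 : coprime x y -> u1 %| x -> u2 %| y ->
  u1 = gcdn x (u1 * u2) /\ u2 = gcdn y (u1 * u2).
Proof.
move=> cxy u1x u2y; split.
- rewrite Gauss_gcdl; first by apply/esym/gcdn_idPr.
  exact: coprime_dvdr u2y cxy.
- rewrite Gauss_gcdr; first by apply/esym/gcdn_idPr.
  by apply: coprime_dvdr u1x _; rewrite coprime_sym.
Qed.

Lemma ed_perm x y : coprime x y -> 0 < x -> 0 < y ->
  perm_eq (edivisors (x * y)) [seq d1 * d2 | d1 <- edivisors x, d2 <- edivisors y].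
Proof.
move=> cxy x0 y0; apply: uniq_perm.
- exact: uniq_ed.
- apply: allpairs_uniq; [exact: uniq_ed|exact: uniq_ed|].
  move=> [a1 a2] [b1 b2] /allpairsP[[u1 u2] [/= hu1 hu2 [-> ->]]].
  move=> /allpairsP[[v1 v2] [/= hv1 hv2 [-> ->]]] /= E.
  have [k1 k2] := split_uniq cxy (ed_dvd hu1) (ed_dvd hu2).
  have [l1 l2] := split_uniq cxy (ed_dvd hv1) (ed_dvd hv2).
  congr (_, _); first by rewrite k1 E -l1.
  by rewrite k2 E -l2.
- move=> d; apply/idP/idP.
  + rewrite mem_ed ?muln_gt0 ?x0 // => hd.
    apply/allpairsP; exists (gcdn d x, gcdn d y); rewrite !mem_ed //; split.
    * exact: ed_split_l hd.
    * by apply: (@ed_split_l y x) => //; [rewrite coprime_sym | rewrite mulnC].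
    * apply: gcd_split cxy; by case/andP: hd => /andP[].
  + case/allpairsP => [[u1 u2] [/= h1 h2 ->]].
    rewrite mem_ed ?muln_gt0 ?x0 //; apply: ed_mul => //; rewrite -mem_ed //.
Qed.

Lemma Te_mul x y : coprime x y -> 0 < x -> 0 < y ->
  Te (x * y) = Te x ^ K y * Te y ^ K x.
Proof.
move=> cxy x0 y0; rewrite /Te (perm_big _ (ed_perm cxy x0 y0)) /=.
rewrite big_allpairs_dep /=.
under eq_bigr => d1 _ do rewrite big_split /= prod_const_seq.
by rewrite big_split /= prod_exp_seq prod_const_seq.
Qed.

Lemma K_mul x y : coprime x y -> 0 < x -> 0 < y -> K (x * y) = K x * K y.
Proof.
move=> cxy x0 y0; rewrite /K (perm_size (ed_perm cxy x0 y0)).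
by rewrite size_allpairs.
Qed.

Lemma ed_pp p a : prime p -> 0 < a ->
  perm_eq (edivisors (p ^ a)) [seq p ^ b | b <- divisors a].
Proof.
move=> pp a0; have p1 := prime_gt1 pp.
apply: uniq_perm; first exact: uniq_ed.
  by rewrite map_inj_uniq ?divisors_uniq //; exact: expnI.
move=> d; rewrite mem_ed ?expn_gt0 ?prime_gt0 //.
have prs : primes (p ^ a) = [:: p] by rewrite primesX // primes_prime.
apply/idP/idP.
- case/andP=> /andP[/(dvdn_pfactor _ _ pp) [b ba ->] _].
  rewrite prs => /allP /(_ p (mem_head _ _)); cbv beta; rewrite !pfactorK // => ba'.
  by apply/mapP; exists b => //; rewrite -dvdn_divisors.
- case/mapP=> b; rewrite -dvdn_divisors // => ba ->.
  rewrite /is_edivisor dvdn_exp2l; last exact: dvdn_leq.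
  rewrite expn_gt0 (prime_gt0 pp) prs !andTb.
  by apply/allP => q; rewrite inE => /eqP ->; rewrite !pfactorK.
Qed.



Lemma Te_pp p a : prime p -> 0 < a -> Te (p ^ a) = p ^ sig a.
Proof. by move=> pp a0; rewrite /Te (perm_big _ (ed_pp pp a0)) big_map prod_pow_sum. Qed.

Lemma K_pp p a : prime p -> 0 < a -> K (p ^ a) = ndiv a.
Proof. by move=> pp a0; rewrite /K (perm_size (ed_pp pp a0)) size_map. Qed.

Lemma pcomp p A B X Y : prime p -> coprime p X -> coprime p Y ->
  p ^ A * X = p ^ B * Y -> A = B /\ X = Y.
Proof.
move=> pp cX cY E.
have pos Z : coprime p Z -> 0 < Z.
  case: Z => // ; rewrite /coprime gcdn0 => /eqP p1.
  by move: (prime_gt1 pp); rewrite p1.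
have hA : logn p (p ^ A * X) = A.
  by rewrite lognM ?expn_gt0 ?(prime_gt0 pp) ?(pos _ cX) // pfactorK // (logn_coprime cX) addn0.
have hB : logn p (p ^ B * Y) = B.
  by rewrite lognM ?expn_gt0 ?(prime_gt0 pp) ?(pos _ cY) // pfactorK // (logn_coprime cY) addn0.
have AB : A = B by rewrite -hA E hB.
split=> //; move: E; rewrite AB => /eqP; rewrite eqn_pmul2l ?expn_gt0 ?prime_gt0 //.
by move/eqP.
Qed.

Lemma divisors1 : divisors 1 = [:: 1].
Proof. by []. Qed.

Lemma sig1 : sig 1 = 1.
Proof. by rewrite /sig divisors1 big_seq1. Qed.

Lemma ndiv1 : ndiv 1 = 1.
Proof. by rewrite /ndiv divisors1. Qed.

Lemma sig_ge a : 0 < a -> a <= sig a.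
Proof.
move=> a0; rewrite /sig (bigD1_seq a) ?divisors_uniq -?dvdn_divisors //=.
exact: leq_addr.
Qed.

Lemma ndiv_gt0 a : 0 < a -> 0 < ndiv a.
Proof.
move=> a0; rewrite /ndiv lt0n size_eq0; apply/eqP => E.
by move: (dvdnn a); rewrite dvdn_divisors // E.
Qed.

Lemma sub1a a : 1 < a -> {subset [:: 1; a] <= divisors a}.
Proof.
move=> a1 d; rewrite !inE => /orP[] /eqP ->; rewrite -dvdn_divisors ?dvd1n ?dvdnn //; lia.
Qed.

Lemma uniq1a a : 1 < a -> uniq [:: 1; a].
Proof. move=> a1; rewrite /= inE andbT; apply/eqP; lia. Qed.

Lemma ndiv_ge2 a : 1 < a -> 2 <= ndiv a.
Proof. move=> a1; exact: (uniq_leq_size (uniq1a a1) (sub1a a1)). Qed.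

Lemma ndiv_eq1 a : 0 < a -> ndiv a = 1 -> a = 1.
Proof.
move=> a0 h; case: (ltngtP a 1) => // a1; first lia.
by move: (ndiv_ge2 a1); rewrite h.
Qed.

Lemma ndiv_eq2 b : 0 < b -> ndiv b = 2 -> sig b = b.+1.
Proof.
move=> b0 h; have b1 : 1 < b.
  case: b b0 h => [|[|b]] // _; rewrite ndiv1; lia.
have [_ E] := uniq_min_size (uniq1a b1) (sub1a b1) (eq_leq h).
have P : perm_eq [:: 1; b] (divisors b).
  by apply: uniq_perm; [exact: uniq1a|exact: divisors_uniq|exact: E].
by rewrite /sig -(perm_big _ P) /= big_cons big_seq1 add1n.
Qed.

Lemma decomp n : 1 < n ->
  exists p a m, [/\ prime p, 0 < a, 0 < m, coprime p m & n = p ^ a * m].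
Proof.
move=> n1; have pp := pdiv_prime n1; have n0 : 0 < n by lia.
case: (pfactor_coprime pp n0) => m cm E.
exists (pdiv n), (logn (pdiv n) n), m; split=> //.
- by rewrite logn_gt0 mem_primes pp n0 pdiv_dvd.
- by move: n0; rewrite E muln_gt0 => /andP[].
- by rewrite mulnC.
Qed.

Lemma Te_pm p a m : prime p -> 0 < a -> 0 < m -> coprime p m ->
  Te (p ^ a * m) = p ^ (sig a * K m) * Te m ^ ndiv a.
Proof.
move=> pp a0 m0 cpm.
have cpa : coprime (p ^ a) m by rewrite coprime_pexpl.
have pa0 : 0 < p ^ a by rewrite expn_gt0 (prime_gt0 pp).
by rewrite (Te_mul cpa pa0 m0) (Te_pp pp a0) (K_pp pp a0) -expnM.
Qed.

Lemma K_pm p a m : prime p -> 0 < a -> 0 < m -> coprime p m ->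
  K (p ^ a * m) = ndiv a * K m.
Proof.
move=> pp a0 m0 cpm.
have cpa : coprime (p ^ a) m by rewrite coprime_pexpl.
have pa0 : 0 < p ^ a by rewrite expn_gt0 (prime_gt0 pp).
by rewrite (K_mul cpa pa0 m0) (K_pp pp a0).
Qed.

Lemma perfect_pp n : 1 < n -> Te n = n ^ 2 ->
  exists p a, [/\ prime p, 0 < a & n = p ^ a].
Proof.
elim/ltn_ind: n => n IH n1 Hn.
have [p [a [m [pp a0 m0 cpm E]]]] := decomp n1.
case: (ltngtP m 1) => [m01|m1|m_1]; first lia; last first.
  have {}m_1 : m = 1 by lia.
  by exists p, a; rewrite E m_1 muln1.
have p1 := prime_gt1 pp.
rewrite E Te_pm // expnMn -expnM in Hn.
have [e1 e2] := pcomp pp (coprimeXr _ (coprime_Te cpm)) (coprimeXr _ cpm) Hn.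
have nd0 := ndiv_gt0 a0.
have hle : ndiv a <= 2.
  rewrite -(leq_exp2l _ _ m1) -e2 leq_exp2r //; exact: Te_ge.
have Km0 := K_gt0 m0.
have [hd|hd] : ndiv a = 1 \/ ndiv a = 2 by lia.
- have a1 := ndiv_eq1 a0 hd.
  rewrite a1 sig1 mul1n in e1.
  rewrite hd expn1 in e2.
  have mn : m < n by rewrite E a1 expn1; nia.
  have [q [b [pq b0 mq]]] := IH m mn m1 e2.
  rewrite mq K_pp // in e1.
  rewrite mq Te_pp // -expnM in e2.
  have := ndiv_eq2 b0 e1; move: e2 => /(expnI (prime_gt1 pq)) ->.
  move=> hb; have b1 : b = 1 by lia.
  by move: e1; rewrite b1 ndiv1.
- rewrite (ndiv_eq2 a0 hd) in e1.
  have a1 : a = 1.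
    move: e1 Km0; case: (K m) => [|[|k]] //; [lia | nia].
  by move: hd; rewrite a1 ndiv1.
Qed.

Lemma super_pp n : 1 < n -> Te (Te n) = n ^ 2 ->
  exists p a, [/\ prime p, 0 < a & n = p ^ a].
Proof.
elim/ltn_ind: n => n IH n1 Hn.
have [p [a [m [pp a0 m0 cpm E]]]] := decomp n1.
case: (ltngtP m 1) => [m01|m1|m_1]; first lia; last first.
  have {}m_1 : m = 1 by lia.
  by exists p, a; rewrite E m_1 muln1.
have p1 := prime_gt1 pp.
have Km0 := K_gt0 m0.
have c0 : 0 < sig a * K m by rewrite muln_gt0 Km0 andbT; exact: leq_trans a0 (sig_ge a0).
set c := sig a * K m in c0.
set m' := Te m ^ ndiv a.
have cpm' : coprime p m' := coprimeXr _ (coprime_Te cpm).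
have m'0 : 0 < m' by rewrite expn_gt0 Te_gt0.
rewrite E Te_pm // -/c -/m' Te_pm // expnMn -expnM in Hn.
have [e1 e2] := pcomp pp (coprimeXr _ (coprime_Te cpm')) (coprimeXr _ cpm) Hn.
have nd0 := ndiv_gt0 a0.
have nc0 := ndiv_gt0 c0.
have hle : ndiv a * ndiv c <= 2.
  rewrite -(leq_exp2l _ _ m1) -e2 expnM.
  apply: leq_trans (_ : m' ^ ndiv c <= _); last by rewrite leq_exp2r // Te_ge.
  by rewrite leq_exp2r // leq_exp2r // Te_ge.
have [hd|hd] : ndiv c = 1 \/ (ndiv c = 2 /\ ndiv a = 1) by nia.
- have c1 := ndiv_eq1 c0 hd.
  have [sa1 km1] : sig a = 1 /\ K m = 1.
    by move: c1; rewrite /c => /eqP; rewrite muln_eq1 => /andP[/eqP -> /eqP ->].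
  have a1 : a = 1 by move: (sig_ge a0); rewrite sa1; lia.
  rewrite hd expn1 /m' a1 ndiv1 expn1 in e2.
  have mn : m < n by rewrite E a1 expn1; nia.
  have [q [b [pq b0 mq]]] := IH m mn m1 e2.
  have q1 := prime_gt1 pq.
  rewrite mq K_pp // in km1.
  have b1 := ndiv_eq1 b0 km1.
  move: e2; rewrite mq b1 Te_pp // sig1 Te_pp // sig1 !expn1.
  nia.
- case: hd => hc ha.
  have a1 := ndiv_eq1 a0 ha.
  rewrite (ndiv_eq2 c0 hc) a1 in e1.
  have Km'0 := K_gt0 m'0.
  have cc : c = 1 by nia.
  by move: hc; rewrite cc ndiv1.
Qed.

Theorem mainTheorem2 (n : nat) :
  1 < n -> (mult_e_perfect n \/ mult_e_superperfect n) ->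
  (e_harmonic2 n <-> Se n %| de n).
Proof.
move=> n1 H.
have [p [a [pp a0 En]]] : exists p a, [/\ prime p, 0 < a & n = p ^ a].
  by case: H => H; [exact: perfect_pp | exact: super_pp].
have cop : coprime (Se n) n.
  rewrite En coprime_sym coprime_pexpl // prime_coprime //.
  rewrite /Se primesX // primes_prime // big_seq1 pfactorK //.
  rewrite (bigD1_seq a) ?divisors_uniq -?dvdn_divisors //= subnn expn0.
  have hs : p %| \sum_(i <- divisors a | i != a) p ^ (a - i).
    rewrite big_seq_cond; apply: dvdn_sum => i /andP[ia ina].
    rewrite -dvdn_divisors // in ia; have ila := dvdn_leq a0 ia.
    apply: dvdn_exp (dvdnn p); lia.
  rewrite addnC (dvdn_addr _ hs) dvdn1.
  by apply/eqP => h; move: (prime_gt1 pp); rewrite h.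
by rewrite /e_harmonic2 Gauss_dvdr.
Qed.
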